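(* Let $\Gamma$ be a propositional theory and $Q$ a set of atoms such that every positive occurrence in $\Gamma$ of an atom from $Q$ is in the scope of negation. For each $q\in Q$ let $Def(q)$ be a formula such that every negative occurrence in $Def(q)$ of an atom from $Q$ is in the scope of negation. Then $\Gamma\cup\{Def(q)\to q:q\in Q\}$ and $\Gamma\cup\{Def(q)\leftrightarrow q:q\in Q\}$ have the same stable models.
   Context: Formulas are built from atoms and $\bot$ using $\wedge,\vee,\to$; $\top$, $\neg F$ and $F\leftrightarrow G$ abbreviate $\bot\to\bot$, $F\to\bot$ and $(F\to G)\wedge(G\to F)$. Reduct: $\bot^X=\bot$; $a^X=a$ if $a\in X$, else $\bot$; $(F\otimes G)^X=F^X\otimes G^X$ if $X\models F\otimes G$, else $\bot$; $\Gamma^X=\{F^X:F\in\Gamma\}$. $X$ is a stable model of $\Gamma$ if $X\models\Gamma^X$ and no proper subset of $X$ satisfies $\Gamma^X$. An occurrence of an atom in a formula (with abbreviations expanded) is positive if it is in the antecedent of an even number of implications and negative if odd. An occurrence is in the scope of negation if it occurs inside a subformula of the form $\neg F$, i.e. $F\to\bot$. *)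

(* Defs.v *)
(* Propositional formulas over an arbitrary type of atoms A;
   interpretations are (possibly infinite) sets of atoms X : A -> bool;
   theories are (possibly infinite) sets of formulas. *)
From Stdlib Require Import Bool.

Set Implicit Arguments.

Inductive formula (A : Type) : Type :=
| FBot : formula A
| FAtom : A -> formula A
| FAnd : formula A -> formula A -> formula A
| FOr : formula A -> formula A -> formula A
| FImp : formula A -> formula A -> formula A.

Arguments FBot {A}.

Definition theory (A : Type) := formula A -> Prop.

Definition FNeg {A} (F : formula A) : formula A := FImp F FBot.
Definition FIff {A} (F G : formula A) : formula A := FAnd (FImp F G) (FImp G F).

Fixpoint sat {A} (X : A -> bool) (F : formula A) : bool :=
  match F with
  | FBot => false
  | FAtom a => X a
  | FAnd F G => sat X F && sat X G
  | FOr F G => sat X F || sat X G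
  | FImp F G => implb (sat X F) (sat X G)
  end.

Definition sat_th {A} (X : A -> bool) (T : theory A) : Prop :=
  forall F, T F -> sat X F = true.

Fixpoint reduct {A} (X : A -> bool) (F : formula A) : formula A :=
  match F with
  | FBot => FBot
  | FAtom a => if X a then FAtom a else FBot
  | FAnd F G => if sat X (FAnd F G) then FAnd (reduct X F) (reduct X G) else FBot
  | FOr F G => if sat X (FOr F G) then FOr (reduct X F) (reduct X G) else FBot
  | FImp F G => if sat X (FImp F G) then FImp (reduct X F) (reduct X G) else FBot
  end.

Definition reduct_th {A} (X : A -> bool) (T : theory A) : theory A :=
  fun F => exists G, T G /\ F = reduct X G.

Definition proper_subset {A} (Y X : A -> bool) : Prop :=
  (forall a, Y a = true -> X a = true) /\ (exists a, X a = true /\ Y a = false).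

Definition stable_model {A} (T : theory A) (X : A -> bool) : Prop :=
  sat_th X (reduct_th X T) /\
  forall Y, proper_subset Y X -> ~ sat_th Y (reduct_th X T).

(* occ_ok Q p F : every occurrence in F of an atom from Q whose polarity is
   p (true = positive: in the antecedent of an even number of implications,
   counted relative to F) is in the scope of negation, i.e. inside a
   subformula of the form G -> FBot. *)
Fixpoint occ_ok {A} (Q : A -> Prop) (p : bool) (F : formula A) : Prop :=
  match F with
  | FBot => True
  | FAtom a => if p then ~ Q a else True
  | FAnd F G => occ_ok Q p F /\ occ_ok Q p G
  | FOr F G => occ_ok Q p F /\ occ_ok Q p G
  | FImp F G =>
      match G with
      | FBot => True
      | _ => occ_ok Q (negb p) F /\ occ_ok Q p G
      end
  end.

Definition pos_in_scope_of_neg {A} (Q : A -> Prop) (F : formula A) : Prop := occ_ok Q true F.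
Definition neg_in_scope_of_neg {A} (Q : A -> Prop) (F : formula A) : Prop := occ_ok Q false F.

Definition add_rules {A} (G : theory A) (Q : A -> Prop) (Def : A -> formula A) : theory A :=
  fun F => G F \/ exists q, Q q /\ F = FImp (Def q) (FAtom q).

Definition add_defs {A} (G : theory A) (Q : A -> Prop) (Def : A -> formula A) : theory A :=
  fun F => G F \/ exists q, Q q /\ F = FIff (Def q) (FAtom q).

(* Main.v *)
Require Import Defs.
From Stdlib Require Import Bool Classical ClassicalEpsilon.

Lemma ex_pb (P:Prop) : exists b:bool, b = true <-> P.
Proof.
  destruct (classic P) as [H|H]; [exists true|exists false]; split; intros; auto;
  try discriminate; contradiction.
Qed.
Definition pb (P:Prop) : bool := proj1_sig (constructive_indefinite_description _ (ex_pb P)).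
Lemma pb_spec P : pb P = true <-> P.
Proof. unfold pb. destruct (constructive_indefinite_description _ _); simpl; auto. Qed.

Lemma reductB {A} (X Y:A->bool) F : sat Y (reduct X F) = true -> sat X F = true.
Proof.
  destruct F; simpl; intro H.
  - discriminate.
  - destruct (X a); simpl in *; auto.
  - destruct (sat X F1 && sat X F2); simpl in *; auto.
  - destruct (sat X F1 || sat X F2); simpl in *; auto.
  - destruct (implb (sat X F1) (sat X F2)); simpl in *; auto.
Qed.

Lemma reductC {A} (X:A->bool) F : sat X (reduct X F) = sat X F.
Proof.
  induction F; simpl.
  - reflexivity.
  - destruct (X a) eqn:E; simpl; auto.
  - destruct (sat X F1 && sat X F2) eqn:E; simpl; rewrite ?IHF1, ?IHF2; auto.
  - destruct (sat X F1 || sat X F2) eqn:E; simpl; rewrite ?IHF1, ?IHF2; auto.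
  - destruct (implb (sat X F1) (sat X F2)) eqn:E; simpl; rewrite ?IHF1, ?IHF2; auto.
Qed.

Lemma reductA {A} (X:A->bool) (Q:A->Prop) F : forall p, occ_ok Q p F -> forall Y Y',
  (forall a, ~Q a -> Y a = Y' a) ->
  (forall a, Q a -> if p then (Y' a = true -> Y a = true) else (Y a = true -> Y' a = true)) ->
  sat Y (reduct X F) = true -> sat Y' (reduct X F) = true.
Proof.
  induction F; intros p Hocc Y Y' H1 H2; simpl.
  - auto.
  - destruct (X a); simpl; auto. intro Ha.
    destruct (classic (Q a)) as [Hq|Hq].
    + specialize (H2 a Hq). simpl in Hocc. destruct p; [contradiction|auto].
    + rewrite <- H1; auto.
  - simpl in Hocc. destruct Hocc as [Ha Hb].
    destruct (sat X F1 && sat X F2); simpl; auto.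
    intro H; apply andb_true_iff in H; apply andb_true_iff; destruct H; split;
    [eapply IHF1|eapply IHF2]; eauto.
  - simpl in Hocc. destruct Hocc as [Ha Hb].
    destruct (sat X F1 || sat X F2); simpl; auto.
    intro H; apply orb_true_iff in H; apply orb_true_iff; destruct H; [left|right];
    [eapply IHF1|eapply IHF2]; eauto.
  - destruct (implb (sat X F1) (sat X F2)) eqn:E; simpl; auto.
    assert (Gen : occ_ok Q (negb p) F1 /\ occ_ok Q p F2 ->
       implb (sat Y (reduct X F1)) (sat Y (reduct X F2)) = true ->
       implb (sat Y' (reduct X F1)) (sat Y' (reduct X F2)) = true).
    { intros [Ha Hb] H. destruct (sat Y' (reduct X F1)) eqn:E1; simpl; auto.
      assert (HY : sat Y (reduct X F1) = true).
      { eapply (IHF1 (negb p) Ha Y' Y); auto.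
        - intros; symmetry; auto.
        - intros a Hq; specialize (H2 a Hq); destruct p; simpl; auto. }
      rewrite HY in H; simpl in H. eapply IHF2; eauto. }
    destruct F2; simpl in Hocc; try (apply Gen; auto; fail).
    intros _. simpl. destruct (sat Y' (reduct X F1)) eqn:E1; auto.
    apply reductB in E1. rewrite E1 in E; simpl in E. discriminate.
Qed.

Lemma sat_th_red {A} (X Y:A->bool) T : sat_th Y (reduct_th X T) <-> forall G, T G -> sat Y (reduct X G) = true.
Proof.
  unfold sat_th, reduct_th; split.
  - intros H G HG. apply H. eauto.
  - intros H F [G [HG ->]]. auto.
Qed.

Lemma reduct_and {A} (X:A->bool) F G : sat X (FAnd F G) = true -> reduct X (FAnd F G) = FAnd (reduct X F) (reduct X G).
Proof. intro H. simpl. simpl in H. rewrite H. reflexivity. Qed.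
Lemma reduct_imp {A} (X:A->bool) F G : sat X (FImp F G) = true -> reduct X (FImp F G) = FImp (reduct X F) (reduct X G).
Proof. intro H. simpl. simpl in H. rewrite H. reflexivity. Qed.

Theorem proposition9 (A : Type) (Gamma : theory A) (Q : A -> Prop)
  (Def : A -> formula A)
  (hGamma : forall F, Gamma F -> pos_in_scope_of_neg Q F)
  (hDef : forall q, Q q -> neg_in_scope_of_neg Q (Def q)) :
  forall X : A -> bool,
    stable_model (add_rules Gamma Q Def) X <-> stable_model (add_defs Gamma Q Def) X.
Proof.
  intro X. split.
  - intros [Hsat Hmin].
    rewrite sat_th_red in Hsat.
    assert (HX1 : forall G, add_rules Gamma Q Def G -> sat X G = true).
    { intros G HG. rewrite <- reductC. auto. }
    assert (HXG : forall G, Gamma G -> sat X G = true) by (intros; apply HX1; left; auto).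
    assert (HR : forall q, Q q -> sat X (Def q) = true -> X q = true).
    { intros q Hq HD. assert (H := HX1 _ (or_intror (ex_intro _ q (conj Hq eq_refl)))).
      simpl in H. rewrite HD in H. exact H. }
    assert (HD : forall q, Q q -> X q = true -> sat X (Def q) = true).
    { intros q Hq Xq. destruct (sat X (Def q)) eqn:E; auto. exfalso.
      set (Y := fun a => X a && negb (pb (a = q))).
      apply (Hmin Y).
      - split.
        + unfold Y; intros a Ha; apply andb_true_iff in Ha; tauto.
        + exists q. split; auto. unfold Y. rewrite Xq. simpl.
          assert (pb (q = q) = true) by (apply pb_spec; auto). rewrite H; auto.
      - apply sat_th_red. intros G [HG | [q' [Hq' ->]]].
        + apply (reductA X Q G true (hGamma G HG) X Y).
          * intros a Ha. unfold Y. destruct (pb (a = q)) eqn:E2.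
            -- apply (proj1 (pb_spec _)) in E2; rewrite E2 in Ha; contradiction.
            -- simpl. rewrite andb_true_r; auto.
          * intros a _ Ha. unfold Y in Ha. apply andb_true_iff in Ha; tauto.
          * rewrite reductC; auto.
        + assert (HI := HX1 _ (or_intror (ex_intro _ q' (conj Hq' eq_refl)))).
          rewrite (reduct_imp _ _ _ HI). simpl.
          destruct (sat X (Def q')) eqn:E3.
          * assert (q' <> q) by (intro; subst; congruence).
            simpl in HI. rewrite E3 in HI. simpl in HI. rewrite HI. simpl.
            unfold Y. rewrite HI. destruct (pb (q' = q)) eqn:E4.
            -- apply (proj1 (pb_spec _)) in E4; contradiction.
            -- simpl. apply implb_true_r.
          * destruct (sat Y (reduct X (Def q'))) eqn:E5; auto.
            apply reductB in E5. congruence. }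
    assert (HXT2 : forall G, add_defs Gamma Q Def G -> sat X G = true).
    { intros G [HG | [q [Hq ->]]]; auto. simpl.
      destruct (X q) eqn:Xq.
      - rewrite HD; auto.
      - destruct (sat X (Def q)) eqn:E; auto. rewrite HR in Xq; auto. }
    split.
    + apply sat_th_red. intros G HG. rewrite reductC. auto.
    + intros Y HYX HY. apply (Hmin Y HYX).
      rewrite sat_th_red in *. intros G [HG | [q [Hq ->]]].
      * apply HY. left; auto.
      * assert (HI := HXT2 _ (or_intror (ex_intro _ q (conj Hq eq_refl)))).
        assert (H := HY _ (or_intror (ex_intro _ q (conj Hq eq_refl)))).
        unfold FIff in H, HI. rewrite (reduct_and _ _ _ HI) in H. simpl in H.
        apply andb_true_iff in H. tauto.
  - intros [Hsat Hmin].
    rewrite sat_th_red in Hsat.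
    assert (HXT2 : forall G, add_defs Gamma Q Def G -> sat X G = true).
    { intros G HG. rewrite <- reductC. auto. }
    assert (HR : forall q, Q q -> sat X (Def q) = true -> X q = true).
    { intros q Hq HD. assert (H := HXT2 _ (or_intror (ex_intro _ q (conj Hq eq_refl)))).
      simpl in H. rewrite HD in H. simpl in H. apply andb_true_iff in H. tauto. }
    assert (HD : forall q, Q q -> X q = true -> sat X (Def q) = true).
    { intros q Hq Xq. assert (H := HXT2 _ (or_intror (ex_intro _ q (conj Hq eq_refl)))).
      simpl in H. rewrite Xq in H. apply andb_true_iff in H. destruct H as [_ H]. exact H. }
    assert (HXT1 : forall G, add_rules Gamma Q Def G -> sat X G = true).
    { intros G [HG | [q [Hq ->]]]. { apply HXT2; left; auto. }
      simpl. destruct (sat X (Def q)) eqn:E; auto. simpl. apply HR; auto. }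
    split.
    + apply sat_th_red. intros G HG. rewrite reductC. auto.
    + intros Y [HYX [a0 [Xa0 Ya0]]] HY. rewrite sat_th_red in HY.
      assert (K : forall q, Q q -> sat Y (reduct X (Def q)) = true -> Y q = true).
      { intros q Hq H. assert (HI := HXT1 _ (or_intror (ex_intro _ q (conj Hq eq_refl)))).
        assert (H2 := HY _ (or_intror (ex_intro _ q (conj Hq eq_refl)))).
        rewrite (reduct_imp _ _ _ HI) in H2. simpl in H2. rewrite H in H2. simpl in H2.
        destruct (X q); simpl in H2; auto; discriminate. }
      set (S := fun Z : A -> bool => (forall a, Z a = true -> Y a = true) /\
                 (forall a, ~ Q a -> Z a = Y a) /\
                 (forall q, Q q -> Z q = true -> sat Z (reduct X (Def q)) = true)).
      set (Y' := fun a => pb (exists Z, S Z /\ Z a = true)).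
      assert (F1 : forall a, Y' a = true -> Y a = true).
      { intros a H. apply (proj1 (pb_spec _)) in H. destruct H as [Z [[HS _] HZ]]. auto. }
      assert (F3 : forall Z a, S Z -> Z a = true -> Y' a = true).
      { intros Z a HS HZ. apply pb_spec. eauto. }
      assert (F2 : forall a, ~ Q a -> Y' a = Y a).
      { intros a Ha. destruct (Y a) eqn:Ea.
        - apply (F3 (fun b => Y b && negb (pb (Q b)))).
          + split; [|split].
            * intros b Hb. apply andb_true_iff in Hb; tauto.
            * intros b Hb. destruct (pb (Q b)) eqn:E.
              -- apply (proj1 (pb_spec _)) in E; contradiction.
              -- simpl; apply andb_true_r.
            * intros q Hq Hz. assert (pb (Q q) = true) by (apply pb_spec; auto).
              rewrite H in Hz. rewrite andb_false_r in Hz. discriminate.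
          + simpl. rewrite Ea. destruct (pb (Q a)) eqn:E; auto.
            apply (proj1 (pb_spec _)) in E; contradiction.
        - destruct (Y' a) eqn:E; auto. apply F1 in E. congruence. }
      assert (F5 : forall q, Q q -> Y' q = true -> sat Y' (reduct X (Def q)) = true).
      { intros q Hq H. apply (proj1 (pb_spec _)) in H. destruct H as [Z [HS HZ]].
        pose proof HS as [_ [HS2 HS3]].
        apply (reductA X Q (Def q) false (hDef q Hq) Z Y').
        - intros a Ha. rewrite F2; auto.
        - intros a _ Ha. eauto.
        - auto. }
      assert (SY' : S Y') by (split; [|split]; auto).
      assert (F6 : forall q, Q q -> sat Y' (reduct X (Def q)) = true -> Y' q = true).
      { intros q Hq H.
        assert (Yq : Y q = true).
        { apply K; auto. apply (reductA X Q (Def q) false (hDef q Hq) Y' Y); auto.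
           }
        assert (G : forall q', sat Y' (reduct X (Def q')) = true -> Q q' ->
                  sat (fun a => Y' a || pb (a = q)) (reduct X (Def q')) = true).
        { intros q' H' Hq'. apply (reductA X Q (Def q') false (hDef q' Hq') Y'); auto.
          - intros a Ha. destruct (pb (a = q)) eqn:E.
            + apply (proj1 (pb_spec _)) in E. rewrite E in Ha. contradiction.
            + rewrite orb_false_r. auto.
          - intros a _ Ha. simpl. rewrite Ha. auto. }
        apply (F3 (fun a => Y' a || pb (a = q))).
        - split; [|split].
          + intros a Ha. apply orb_true_iff in Ha. destruct Ha as [Ha|Ha]; auto.
            apply (proj1 (pb_spec _)) in Ha. rewrite Ha. auto.
          + intros a Ha. destruct (pb (a = q)) eqn:E.
            * apply (proj1 (pb_spec _)) in E. rewrite E in Ha. contradiction.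
            * rewrite orb_false_r. auto.
          + intros q' Hq' Hz. apply G; auto.
            apply orb_true_iff in Hz. destruct Hz as [Hz|Hz]; auto.
            apply (proj1 (pb_spec _)) in Hz. rewrite Hz. auto.
        - simpl. assert (pb (q = q) = true) by (apply pb_spec; auto).
          rewrite H0. apply orb_true_r. }
      apply (Hmin Y').
      * split.
        -- intros a Ha. auto.
        -- exists a0. split; auto. destruct (Y' a0) eqn:E; auto. apply F1 in E. congruence.
      * apply sat_th_red. intros G [HG | [q [Hq ->]]].
        -- apply (reductA X Q G true (hGamma G HG) Y Y').
           ++ intros a Ha. rewrite F2; auto.
           ++ intros a _ Ha. auto.
           ++ apply HY. left; auto.
        -- assert (HI := HXT2 _ (or_intror (ex_intro _ q (conj Hq eq_refl)))).
           unfold FIff in *. rewrite (reduct_and _ _ _ HI).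
           simpl in HI. apply andb_true_iff in HI. destruct HI as [HI1 HI2].
           change (implb (sat X (Def q)) (sat X (FAtom q)) = true) in HI1.
           change (implb (sat X (FAtom q)) (sat X (Def q)) = true) in HI2.
           rewrite (reduct_imp X (Def q) (FAtom q) HI1), (reduct_imp X (FAtom q) (Def q) HI2).
           assert (E : sat Y' (reduct X (FAtom q)) = sat Y' (reduct X (Def q))).
           { simpl. destruct (X q) eqn:Xq.
             - simpl. destruct (Y' q) eqn:E1.
               + symmetry. apply F5; auto.
               + destruct (sat Y' (reduct X (Def q))) eqn:E2; auto.
                 rewrite F6 in E1; auto.
             - simpl. destruct (sat Y' (reduct X (Def q))) eqn:E2; auto.
               apply reductB in E2. rewrite HR in Xq; auto. }
           change (implb (sat Y' (reduct X (Def q))) (sat Y' (reduct X (FAtom q))) && implb (sat Y' (reduct X (FAtom q))) (sat Y' (reduct X (Def q))) = true). rewrite E. destruct (sat Y' (reduct X (Def q))); auto.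
Qed.
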